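(* Let $n\ge1$ and $\pi\in S_n$, and set $w=\hat\pi$. Then $\pi\in\mathcal C_n(321)$ if and only if $\hat\pi_1=n$ and $$N_{\underline{32}\,\underline{41}}(w)+N_{\underline{14}\,\underline{23}}(w)+N_{\underline{41}\,\underline{32}}(w)+M(\pi)=0,$$ where $M(\pi)=\#\{(i,k): i+2\le k\le n,\ \hat\pi_k<\hat\pi_i<\hat\pi_{i+1}<\pi(\hat\pi_k)\}$. In particular, $\pi\in\mathcal C_n(321)$ iff $\hat\pi_1=n$, $\hat\pi$ avoids $\underline{32}\,\underline{41}$, $\underline{14}\,\underline{23}$, $\underline{41}\,\underline{32}$, and $M(\pi)=0$.
   Context: Permutations of $[n]$ are written in one-line notation $\pi=\pi_1\cdots\pi_n$. A permutation contains $321$ if there are $i<j<k$ with $\pi_i>\pi_j>\pi_k$. $\mathcal C_n$ is the set of cyclic permutations of $[n]$ (a single $n$-cycle), and $\mathcal C_n(321)$ those avoiding $321$. The standard cycle notation of $\pi$ writes each cycle with its largest element first, as $(m,\pi(m),\pi^2(m),\dots)$, and lists the cycles in increasing order of their largest elements. $\theta:S_n\to S_n$ sends $\pi$ to the permutation whose one-line notation is the standard cycle notation of $\pi$ with parentheses erased; $\hat\pi=\theta(\pi)$. For a sequence $w=w_1\cdots w_N$ of distinct integers, with pairs $(i,j)$ ranging over $i+2\le j\le N-1$: $N_{\underline{32}\,\underline{41}}(w)=\#\{(i,j): w_{j+1}<w_{i+1}<w_i<w_j\}$; $N_{\underline{14}\,\underline{23}}(w)=\#\{(i,j): w_i<w_j<w_{j+1}<w_{i+1}\}$;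 $N_{\underline{41}\,\underline{32}}(w)=\#\{(i,j): w_{i+1}<w_{j+1}<w_j<w_i\}$. $w$ avoids such a pattern if its count is $0$. *)

(* Defs.v *)
From mathcomp Require Import all_boot all_order all_fingroup.
Set Implicit Arguments. Unset Strict Implicit. Unset Printing Implicit Defensive.

(* Permutations of [n] are modelled as {perm 'I_n}; the element k of [n]
   corresponds to the ordinal k-1.  Positions are 1-based as in the paper. *)

Definition is_cyclic n (p : {perm 'I_n}) : bool := #|porbits p| == 1.

Definition contains321 n (p : {perm 'I_n}) : bool :=
  [exists i : 'I_n, exists j : 'I_n, exists k : 'I_n,
    [&& i < j, j < k, p j < p i & p k < p j]].

Definition cycle_max n (p : {perm 'I_n}) (m : 'I_n) : bool :=
  [forall x in porbit p m, x <= m].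

(* theta p: standard cycle notation with parentheses erased, as a sequence of
   elements of 'I_n: cycles (m, p m, p^2 m, ...) with m the cycle maximum,
   listed in increasing order of m. *)
Definition theta n (p : {perm 'I_n}) : seq 'I_n :=
  flatten [seq traject p m #|porbit p m| | m <- enum 'I_n & cycle_max p m].

Definition hatw n (p : {perm 'I_n}) : seq nat := [seq (val x).+1 | x <- theta p].

Definition phatw n (p : {perm 'I_n}) : seq nat := [seq (val (p x)).+1 | x <- theta p].

Definition at1 (w : seq nat) (i : nat) : nat := nth 0 w i.-1.

Definition count_pairs (N : nat) (P : nat -> nat -> bool) : nat :=
  count (fun ij : nat * nat => [&& ij.1 + 2 <= ij.2, ij.2 <= N.-1 & P ij.1 ij.2])
        [seq (i, j) | i <- iota 1 N, j <- iota 1 N].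

Definition N32_41 (w : seq nat) : nat :=
  count_pairs (size w) (fun i j =>
    [&& at1 w j.+1 < at1 w i.+1, at1 w i.+1 < at1 w i & at1 w i < at1 w j]).

Definition N14_23 (w : seq nat) : nat :=
  count_pairs (size w) (fun i j =>
    [&& at1 w i < at1 w j, at1 w j < at1 w j.+1 & at1 w j.+1 < at1 w i.+1]).

Definition N41_32 (w : seq nat) : nat :=
  count_pairs (size w) (fun i j =>
    [&& at1 w i.+1 < at1 w j.+1, at1 w j.+1 < at1 w j & at1 w j < at1 w i]).

Definition Mstat n (p : {perm 'I_n}) : nat :=
  let w := hatw p in let v := phatw p in
  count (fun ik : nat * nat => [&& ik.1 + 2 <= ik.2, ik.2 <= n,
            at1 w ik.2 < at1 w ik.1, at1 w ik.1 < at1 w ik.1.+1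
          & at1 w ik.1.+1 < at1 v ik.2])
        [seq (i, k) | i <- iota 1 n, k <- iota 1 n].

(* Main.v *)
Require Import Defs.
From mathcomp Require Import all_boot all_order all_fingroup.
From mathcomp Require Import zify.
Set Implicit Arguments. Unset Strict Implicit. Unset Printing Implicit Defensive.

Lemma card_lt N k : k <= N -> #|[set z : 'I_N | z < k]| = k.
Proof.
move=> kN.
have -> : [set z : 'I_N | z < k] = [set widen_ord kN z | z in 'I_k].
  apply/setP=> z; rewrite inE; apply/idP/imsetP.
    by move=> zk; exists (Ordinal zk) => //; apply: val_inj.
  by case=> u _ ->; rewrite /= ltn_ord.
rewrite card_imset ?card_ord //.
by move=> a b /(congr1 val) /= /val_inj.
Qed.

Lemma card_preim_lt N (p : {perm 'I_N}) (k : nat) : k <= N ->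
  #|[set z | p z < k]| = k.
Proof. move=> kN.
have -> : [set z | p z < k] = p @^-1: [set v : 'I_N | v < k].
  by apply/setP=> z; rewrite !inE.
by rewrite card_preimset ?card_lt //; apply: perm_inj.
Qed.

Lemma exc321 N (p : {perm 'I_N}) (x y : 'I_N) :
  x < y -> y < p y -> p y < p x -> contains321 p.
Proof.
move=> xy yp pyx.
case: (boolP [exists z : 'I_N, (y < z) && (p z < p y)]).
  case/existsP=> z /andP[yz pz].
  by apply/existsP; exists x; apply/existsP; exists y; apply/existsP; exists z;
    rewrite xy yz pyx pz.
move=> /existsPn H.
have sub : [set z | p z < p y] \subset [set z : 'I_N | z < y] :\ x.
  apply/subsetP=> z; rewrite !inE => pz.
  apply/andP; split.
    by apply: contraTneq pz => ->; rewrite -leqNgt ltnW.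
  move: (H z); rewrite pz andbT -leqNgt leq_eqVlt => /orP[/eqP e|//].
  by move: pz; rewrite (val_inj e) ltnn.
move: (subset_leq_card sub).
rewrite card_preim_lt ?(ltnW (ltn_ord _)) //.
have := cardsD1 x [set z : 'I_N | z < y]; rewrite inE xy card_lt ?(ltnW (ltn_ord y)) //= add1n.
move=> e HH; exfalso.
have := leq_trans yp HH; rewrite {1}e.
by move/ltnW; rewrite ltnn.
Qed.

Lemma def321 N (p : {perm 'I_N}) (x y : 'I_N) :
  x < y -> p x < x -> p y < p x -> contains321 p.
Proof.
move=> xy px pyx.
case: (boolP [exists z : 'I_N, (z < x) && (p x < p z)]).
  case/existsP=> z /andP[zx pz].
  by apply/existsP; exists z; apply/existsP; exists x; apply/existsP; exists y;
    rewrite xy zx pyx pz.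
move=> /existsPn H.
have sub : [set z | p x < p z] \subset ([set z : 'I_N | x < z] :\ y).
  apply/subsetP=> z; rewrite !inE => pz.
  apply/andP; split.
    by apply: contraTneq pz => ->; rewrite -leqNgt ltnW.
  move: (H z); rewrite pz andbT -leqNgt leq_eqVlt => /orP[/eqP e|//].
  by move: pz; rewrite (val_inj e) ltnn.
move: (subset_leq_card sub).
have cC : forall (A : {set 'I_N}), #|~: A| = N - #|A|.
  move=> A; have hA : #|A| <= N by rewrite -[leqRHS](card_ord N) max_card.
  by apply/eqP; rewrite -(eqn_add2l #|A|) cardsC subnKC //; apply/eqP; exact: card_ord.
have e1 : [set z | p x < p z] = ~: [set z | p z < (p x).+1].
  by apply/setP=> z; rewrite !inE ltnNge.
have e2 : [set z : 'I_N | x < z] = ~: [set z : 'I_N | z < x.+1].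
  by apply/setP=> z; rewrite !inE ltnNge.
rewrite e1 cC card_preim_lt ?ltn_ord //.
have := cardsD1 y [set z : 'I_N | x < z]; rewrite inE xy /= add1n.
rewrite e2 cC card_lt ?ltn_ord //.
set c := #|_ :\ y| => e HH; exfalso.
move: (ltn_ord x) (ltn_ord (p x)) e HH px; clear; lia.
Qed.
Section Cyc.
Variable n : nat.
Implicit Type p : {perm 'I_n.+1}.

Lemma cyc_all p : is_cyclic p -> forall x, x \in porbit p ord_max.
Proof.
move/cards1P=> [A hA] x.
have h1 : porbit p x \in porbits p by apply: imset_f.
have h2 : porbit p ord_max \in porbits p by apply: imset_f.
rewrite hA inE in h1; rewrite hA inE in h2.
by rewrite -eq_porbit_mem (eqP h1) (eqP h2).
Qed.

Lemma all_cyc p : (forall x, x \in porbit p ord_max) -> is_cyclic p.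
Proof.
move=> H; apply/cards1P; exists (porbit p ord_max).
apply/setP=> A; rewrite inE; apply/imsetP/eqP.
  by case=> z _ ->; apply/eqP; rewrite eq_porbit_mem.
by move=> ->; exists ord_max.
Qed.

Lemma card_all p : (forall x, x \in porbit p ord_max) -> #|porbit p ord_max| = n.+1.
Proof.
move=> H; rewrite -[RHS](card_ord n.+1); apply: eq_card => x.
by rewrite H.
Qed.

Lemma theta_all p : (forall x, x \in porbit p ord_max) ->
  theta p = traject p ord_max n.+1.
Proof.
move=> H; rewrite /theta.
have -> : [seq m <- enum 'I_n.+1 | cycle_max p m] = [:: ord_max].
  rewrite -(@filter_pred1_uniq _ (enum 'I_n.+1) ord_max) ?enum_uniq ?mem_enum //.
  apply: eq_filter => m /=.
  apply/idP/eqP; last first.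
    by move=> ->; apply/forallP=> z; apply/implyP=> _; rewrite -ltnS ltn_ord.
  move/forallP/(_ ord_max)/implyP; rewrite porbit_sym H => /(_ isT) hm.
  by apply/val_inj/eqP; rewrite eqn_leq hm -ltnS ltn_ord.
by rewrite /= cats0 card_all.
Qed.

Lemma head_all p : at1 (hatw p) 1 = n.+1 -> forall x, x \in porbit p ord_max.
Proof.
move=> Hh x; apply/negPn/negP => Hx.
pose M := [arg max_(z > x in porbit p x) (z : nat)].
have [M' HM' HMmax] : extremum_spec geq (fun z => z \in porbit p x) (fun z : 'I_n.+1 => z : nat) M
  by apply: arg_maxnP; apply: porbit_id.
have eM : porbit p M' = porbit p x by apply/eqP; rewrite eq_porbit_mem.
have cmM : cycle_max p M'.
  by apply/forallP=> z; apply/implyP; rewrite eM => /HMmax.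
have MneM : M' != ord_max.
  by apply: contraNneq Hx => <-; rewrite porbit_sym -eM porbit_id.
have Mlt : (M' : nat) < n.
  by move: MneM (ltn_ord M'); rewrite -(inj_eq val_inj) /=; lia.
have cm0 : cycle_max p ord_max.
  by apply/forallP=> z; apply/implyP=> _; rewrite -ltnS ltn_ord.
move: Hh; rewrite /hatw /theta enum_ordSr filter_rcons cm0.
have : has (cycle_max p) [seq widen_ord (leqnSn n) i | i <- enum 'I_n].
  apply/hasP; exists M' => //.
  apply/mapP; exists (Ordinal Mlt); rewrite ?mem_enum //.
  by apply: val_inj.
rewrite has_filter.
case E: [seq _ <- _ | _] => [//|y t] _.
have yin : y \in [seq widen_ord (leqnSn n) i | i <- enum 'I_n].
  have : y \in y :: t by rewrite inE eqxx.
  by rewrite -E mem_filter => /andP[].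
case/mapP: yin => y' _ ->.
rewrite rcons_cons /=.
have := card_porbit_neq0 p (widen_ord (leqnSn n) y').
case: #|_| => [//|k] _ /=.
by move=> [] h; move: (ltn_ord y'); rewrite h ltnn.
Qed.

End Cyc.

Lemma cnt0 N (a : pred (nat * nat)) :
  (forall i j, 1 <= i <= N -> 1 <= j <= N -> ~~ a (i, j)) ->
  count a [seq (i, j) | i <- iota 1 N, j <- iota 1 N] = 0.
Proof.
move=> H; apply/eqP; rewrite -leqn0 leqNgt -has_count; apply/hasPn => ij.
case/allpairsP=> [[i j] [/= hi hj ->]].
by apply: H; rewrite -?mem_iota -1?addn1 1?addnC.
Qed.

Lemma cntpos N (a : pred (nat * nat)) i j :
  1 <= i <= N -> 1 <= j <= N -> a (i, j) ->
  count a [seq (i, j) | i <- iota 1 N, j <- iota 1 N] = 0 -> False.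
Proof.
move=> hi hj ha /eqP; rewrite -leqn0 leqNgt -has_count => /negP; apply.
apply/hasP; exists (i, j) => //.
by apply: allpairs_f; rewrite mem_iota addnC addn1.
Qed.

Section Facts.
Variable n : nat.
Variable p : {perm 'I_n.+1}.
Hypothesis Hall : forall x, x \in porbit p ord_max.
Let e i := iter i p ord_max.

Lemma Hsz : size (hatw p) = n.+1.
Proof. by rewrite /hatw theta_all // size_map size_traject. Qed.

Lemma Hw i : i < n.+1 -> at1 (hatw p) i.+1 = (e i).+1.
Proof.
move=> hi; rewrite /at1 /hatw theta_all // -[i.+1.-1]/i (nth_map ord_max) ?size_traject //.
by rewrite nth_traject.
Qed.

Lemma Hv i : i < n.+1 -> at1 (phatw p) i.+1 = (p (e i)).+1.
Proof.
move=> hi; rewrite /at1 /phatw theta_all // -[i.+1.-1]/i (nth_map ord_max) ?size_traject //.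
by rewrite nth_traject.
Qed.

Lemma HpN : p (e n) = ord_max.
Proof.
have := iter_porbit p ord_max; rewrite card_all //.
Qed.

Lemma Hsurj x : exists2 i, i < n.+1 & x = e i.
Proof.
have := Hall x; rewrite porbit_traject card_all //.
by move/trajectP.
Qed.

Lemma Huniq i j : i < n.+1 -> j < n.+1 -> e i = e j -> i = j.
Proof.
move=> hi hj eij; apply/eqP.
have U := uniq_traject_porbit p ord_max; rewrite card_all // in U.
rewrite -(nth_uniq ord_max _ _ U) ?size_traject //.
by rewrite !nth_traject //; apply/eqP.
Qed.

End Facts.

Lemma key n (p : {perm 'I_n.+1}) :
  (is_cyclic p && ~~ contains321 p) <->
  [/\ at1 (hatw p) 1 = n.+1, N32_41 (hatw p) = 0, N14_23 (hatw p) = 0,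
      N41_32 (hatw p) = 0 & Mstat p = 0].
Proof.
split.
  case/andP=> cyc n321; have Hall := cyc_all cyc.
  have W := Hw Hall; have V := Hv Hall.
  split.
  - by rewrite (W 0).
  - rewrite /N32_41 /count_pairs (Hsz Hall); apply: cnt0 => i j /andP[i1 iN] /andP[j1 jN] /=.
    apply/negP => /and3P[ij jN' /and3P[h1 h2 h3]].
    case: i i1 ij iN h1 h2 h3 => [//|i] _; case: j j1 jN jN' => [//|j] _ jN jN' ij iN.
    rewrite !W ?ltnS /=; try lia.
    move=> h1 h2 h3; move/negP: n321; apply.
    by apply: (def321 (x := iter i p ord_max) (y := iter j p ord_max)).
  - rewrite /N14_23 /count_pairs (Hsz Hall); apply: cnt0 => i j /andP[i1 iN] /andP[j1 jN] /=.
    apply/negP => /and3P[ij jN' /and3P[h1 h2 h3]].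
    case: i i1 ij iN h1 h2 h3 => [//|i] _; case: j j1 jN jN' => [//|j] _ jN jN' ij iN.
    rewrite !W ?ltnS /=; try lia.
    move=> h1 h2 h3; move/negP: n321; apply.
    by apply: (exc321 (x := iter i p ord_max) (y := iter j p ord_max)).
  - rewrite /N41_32 /count_pairs (Hsz Hall); apply: cnt0 => i j /andP[i1 iN] /andP[j1 jN] /=.
    apply/negP => /and3P[ij jN' /and3P[h1 h2 h3]].
    case: i i1 ij iN h1 h2 h3 => [//|i] _; case: j j1 jN jN' => [//|j] _ jN jN' ij iN.
    rewrite !W ?ltnS /=; try lia.
    move=> h1 h2 h3; move/negP: n321; apply.
    by apply: (def321 (x := iter j p ord_max) (y := iter i p ord_max)).
  - rewrite /Mstat; cbv zeta; apply: cnt0 => i k /andP[i1 iN] /andP[k1 kN] /=.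
    apply/negP => /and3P[ik kN' /and3P[h1 h2 h3]].
    case: i i1 ik iN h1 h2 h3 => [//|i] _; case: k k1 kN kN' => [//|k] _ kN kN' ik iN.
    rewrite !W ?V ?ltnS /=; try lia.
    move=> h1 h2 h3; move/negP: n321; apply.
    by apply: (exc321 (x := iter k p ord_max) (y := iter i p ord_max)).
case=> w1 c1 c2 c3 c4; have Hall := head_all w1.
have W := Hw Hall; have V := Hv Hall; have PN := HpN Hall; have U := Huniq Hall.
apply/andP; split; first exact: all_cyc.
apply/negP => /existsP[x /existsP[y /existsP[z /and4P[xy yz pyx pzy]]]].
have [i hi ei] := Hsurj Hall x; have [j hj ej] := Hsurj Hall y; have [k hk ek] := Hsurj Hall z.
subst x y z.
case: (ltngtP (p (iter j p ord_max)) (iter j p ord_max)) => [pyy|ypy|fx].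
-
  have jn : j < n.
    rewrite ltn_neqAle -ltnS hj andbT; apply/eqP => ej; subst j.
    by move: pyy; rewrite PN /= ltnNge -ltnS ltn_ord.
  have kn : k < n.
    rewrite ltn_neqAle -ltnS hk andbT; apply/eqP => ek; subst k.
    move: pzy pyy yz; rewrite PN /= => h1 h2 h3.
    by have := ltn_trans (ltn_trans h1 h2) h3; rewrite ltnNge -ltnS ltn_ord.
  case: (ltngtP j k) => [jk|kj|ejk]; last by move: yz; rewrite ejk ltnn.
  + have jk1 : k != j.+1 by apply/eqP => e; subst k; move: pyy yz; rewrite /=; lia.
    move: c1; rewrite /N32_41 /count_pairs (Hsz Hall).
    apply: (cntpos (i := j.+1) (j := k.+1)); try lia.
    cbv beta; rewrite ![(_, _).1]/= ![(_, _).2]/= !W ?V. all: try (repeat (apply/andP; split)). all: try lia. all: try done.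
  + have kj1 : j != k.+1 by apply/eqP => e; subst j; move: pyy pzy yz; rewrite /=; lia.
    move: c3; rewrite /N41_32 /count_pairs (Hsz Hall).
    apply: (cntpos (i := k.+1) (j := j.+1)); try lia.
    cbv beta; rewrite ![(_, _).1]/= ![(_, _).2]/= !W ?V. all: try (repeat (apply/andP; split)). all: try lia. all: try done.
-
  have jn : j < n.
    rewrite ltn_neqAle -ltnS hj andbT; apply/eqP => ej; subst j.
    by move: pyx; rewrite PN /= ltnNge -ltnS ltn_ord.
  case: (ltngtP i j) => [ij|ji|eij]; last by move: xy; rewrite eij ltnn.
  + have ij1 : j != i.+1 by apply/eqP => e; subst j; move: ypy pyx; rewrite /=; lia.
    move: c2; rewrite /N14_23 /count_pairs (Hsz Hall).
    apply: (cntpos (i := i.+1) (j := j.+1)); try lia.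
    cbv beta; rewrite ![(_, _).1]/= ![(_, _).2]/= !W ?V. all: try (repeat (apply/andP; split)). all: try lia. all: try done.
  + have ji1 : i != j.+1 by apply/eqP => e; subst i; move: ypy xy; rewrite /=; lia.
    move: c4; rewrite /Mstat; cbv zeta.
    apply: (cntpos (i := j.+1) (j := i.+1)); try lia.
    cbv beta; rewrite ![(_, _).1]/= ![(_, _).2]/= !W ?V. all: try (repeat (apply/andP; split)). all: try lia. all: try done.
-
  have fx' : p (iter j p ord_max) = iter j p ord_max by apply: val_inj.
  case: (ltngtP j n) => [jn|nj|ejn].
  + by have := U j.+1 j jn (ltnW jn) fx'; lia.
  + by move: hj; rewrite ltnS leqNgt nj.
  + subst j; move: fx'; rewrite PN => e0.
    have h0 := U 0 n (ltn0Sn _) (leqnn _) e0; subst n.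
    move: xy; have := ltn_ord (iter i p ord_max); have := ltn_ord (iter 0 p ord_max).
    lia.
Qed.

Theorem mainTheorem4 (n : nat) (hn : 1 <= n) (p : {perm 'I_n}) :
  ((is_cyclic p && ~~ contains321 p) <->
     (at1 (hatw p) 1 = n /\
      N32_41 (hatw p) + N14_23 (hatw p) + N41_32 (hatw p) + Mstat p = 0))
  /\
  ((is_cyclic p && ~~ contains321 p) <->
     [/\ at1 (hatw p) 1 = n, N32_41 (hatw p) = 0, N14_23 (hatw p) = 0,
         N41_32 (hatw p) = 0 & Mstat p = 0]).
Proof.
case: n hn p => [//|n] _ p.
split; last exact: key.
split.
  by move/key => [-> -> -> -> ->].
case=> h1 h2; apply/key; split => //; lia.
Qed.
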